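(* For every positive integer $n$, $N'(n,n-1,1)=n$.
   Context: $\mathbb{Z}_4$ is the ring of integers modulo $4$; a $\mathbb{Z}_4$-code of length $n$ is a $\mathbb{Z}_4$-submodule of $\mathbb{Z}_4^n$. Two codes are equivalent if one is obtained from the other by permuting coordinates and changing the signs of some coordinates. Every $\mathbb{Z}_4$-code is permutation-equivalent to one with generator matrix $\begin{pmatrix} I_{k_1} & A & B \\ O & 2I_{k_2} & 2D\end{pmatrix}$ with $A,D$ $(0,1)$-matrices and $B$ a $\mathbb{Z}_4$-matrix; the code then has type $4^{k_1}2^{k_2}$. The trivial extension of a code $C$ of length $n-1$ is $\{(c,0)\mid c\in C\}$ (the only code of length $0$ is the zero code). $N'(n,k_1,k_2)$ denotes the number of equivalence classes of $\mathbb{Z}_4$-codes of length $n$ and type $4^{k_1}2^{k_2}$ that are not equivalent to the trivial extension of any $\mathbb{Z}_4$-code of length $n-1$. *)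

(* Defs.v *)
From HB Require Import structures.
From mathcomp Require Import all_boot all_order fingroup perm all_algebra.
Set Implicit Arguments. Unset Strict Implicit. Unset Printing Implicit Defensive.
Import GRing.Theory.
Local Open Scope ring_scope.

Notation Z4 := 'Z_4.
Notation word n := 'rV[Z4]_n.

Definition is_code (n : nat) (C : {set word n}) : bool :=
  [&& (0 : word n) \in C,
      [forall x in C, forall y in C, x + y \in C] &
      [forall a : Z4, forall x in C, a *: x \in C]].

Definition perm_code (n : nat) (s : 'S_n) (C : {set word n}) : {set word n} :=
  [set (\row_j c 0 (s j)) | c : word _ in C].

Definition equiv_code (n : nat) (C D : {set word n}) : bool :=
  [exists s : 'S_n, exists e : {ffun 'I_n -> bool},
     D == [set (\row_j ((-1) ^+ e j * c 0 (s j))) | c : word _ in C]].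

(* M is a generator matrix in standard form
   ( I_{k1}  A      B   )
   ( O       2I_{k2} 2D )   with A, D (0,1)-matrices. *)
Definition std_form (k1 k2 n : nat) (M : 'M[Z4]_(k1 + k2, n)) : bool :=
  [forall i : 'I_(k1 + k2), forall j : 'I_n,
    if (i < k1)%N then
      (if (j < k1)%N then M i j == ((nat_of_ord i == nat_of_ord j) : nat)%:R
       else if (j < k1 + k2)%N then M i j \in [:: 0; 1]
       else true)
    else
      (if (j < k1)%N then M i j == 0
       else if (j < k1 + k2)%N then
         M i j == (2 * ((nat_of_ord i == nat_of_ord j) : nat))%:R
       else M i j \in [:: 0; 2%:R])].

Definition gen_code (m n : nat) (M : 'M[Z4]_(m, n)) : {set word n} :=
  [set (u *m M) | u : 'rV[Z4]_m].

(* C has type 4^{k1} 2^{k2}: C is permutation-equivalent to the code generated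
   by a matrix in standard form with parameters k1, k2 *)
Definition has_type (n k1 k2 : nat) (C : {set word n}) : bool :=
  (k1 + k2 <= n)%N &&
  [exists s : 'S_n, exists M : 'M[Z4]_(k1 + k2, n),
     std_form M && (perm_code s C == gen_code M)].

(* trivial extension of a code of length m to length n (intended: n = m+1):
   coordinates j < m are copied, the remaining (last) coordinate is 0 *)
Definition triv_ext (m n : nat) (C : {set word m}) : {set word n} :=
  [set (\row_(j < n) match @insub nat (fun k => (k < m)%N) 'I_m (nat_of_ord j) with
                     | Some k => c 0 k | None => 0 end) | c : word _ in C].

Definition nontriv_codes (n k1 k2 : nat) : {set {set word n}} :=
  [set C : {set word n} | [&& is_code C, has_type k1 k2 C &
     ~~ [exists D : {set word n.-1},
           is_code D && equiv_code C (triv_ext n D)]]].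

Definition Nprime (n k1 k2 : nat) : nat :=
  #|[set [set D in nontriv_codes n k1 k2 | equiv_code C D]
       | C in nontriv_codes n k1 k2]|.

(* Main.v *)
Require Import Defs.
From mathcomp Require Import all_boot all_order fingroup perm all_algebra.
Set Implicit Arguments. Unset Strict Implicit. Unset Printing Implicit Defensive.
Import GRing.Theory.
Local Open Scope ring_scope.

Ltac z4 x := case: x => [[|[|[|[|?]]]] ?] //.
Lemma oddZD (x y : Z4) : odd (x + y)%R = odd x (+) odd y.
Proof. z4 x; z4 y. Qed.
Lemma oddZM (x y : Z4) : odd (x * y)%R = odd x && odd y.
Proof. z4 x; z4 y. Qed.
Lemma oddZN (x : Z4) : odd (- x)%R = odd x.
Proof. z4 x. Qed.
Lemma odd_sign (b : bool) (x : Z4) : odd ((-1) ^+ b * x)%R = odd x.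
Proof. case: b; z4 x. Qed.
Lemma sign2 (b : bool) (x : Z4) : (-1) ^+ b * ((-1) ^+ b * x) = x.
Proof. case: b; z4 x; by apply/eqP. Qed.
Lemma even2 (y : Z4) : ~~ odd y -> y = 2%:R * ((y == 2%:R) : nat)%:R.
Proof. z4 y; by move=> _; apply/eqP. Qed.
Lemma sign_two (b : bool) : (-1) ^+ b * (2%:R : Z4) != 0.
Proof. by case: b. Qed.
Lemma odd2 (x : Z4) : odd (2%:R * x)%R = false.
Proof. z4 x. Qed.
Lemma odd_nat (b : bool) : odd ((b : nat)%:R : Z4)%R = b.
Proof. by case: b. Qed.
Lemma odd0 : odd (0%R : Z4) = false. Proof. by []. Qed.
Lemma odd1 : odd (1%R : Z4) = true. Proof. by []. Qed.

Lemma odd_sum (I : finType) (A : pred I) (F : I -> Z4) :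
  odd (\sum_(j | A j) F j)%R = \big[addb/false]_(j | A j) odd (F j).
Proof. exact: (big_morph (fun z : Z4 => odd z) oddZD odd0). Qed.

Definition P n (S : {set 'I_n}) : {set word n} :=
  [set x : word n | ~~ odd (\sum_(j in S) x 0 j)%R].

Definition tr n (s : 'S_n) (e : {ffun 'I_n -> bool}) (c : word n) : word n :=
  \row_j ((-1) ^+ e j * c 0 (s j)).

Lemma tr_odd n (s : 'S_n) e (S : {set 'I_n}) (c : word n) :
  odd (\sum_(j in s @^-1: S) tr s e c 0 j)%R = odd (\sum_(i in S) c 0 i)%R.
Proof.
rewrite !odd_sum [RHS](reindex_inj (@perm_inj _ s)) /=.
apply: eq_big => j; first by rewrite inE.
by move=> _; rewrite mxE odd_sign.
Qed.

Lemma tr_img n (s : 'S_n) e (S : {set 'I_n}) : tr s e @: P S = P (s @^-1: S).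
Proof.
apply/setP => d; apply/imsetP/idP.
- by case=> c Hc ->; rewrite inE tr_odd; rewrite inE in Hc.
- move=> Hd; exists (tr (s^-1)%g [ffun i => e ((s^-1)%g i)] d).
    have -> : S = (s^-1)%g @^-1: (s @^-1: S) by apply/setP => i; rewrite !inE permKV.
    by rewrite inE tr_odd; rewrite inE in Hd.
  by apply/rowP => j; rewrite !mxE ffunE permK sign2.
Qed.

Lemma P_inj n : injective (@P n).
Proof.
move=> S T H.
have key (U : {set 'I_n}) (i : 'I_n) : (\row_j ((j == i) : nat)%:R) \in P U = (i \notin U).
  rewrite inE odd_sum.
  under eq_bigr => j _ do rewrite mxE odd_nat.
  case: (boolP (i \in U)) => Hi.
    rewrite (bigD1 i) //= eqxx big1 //= => j /andP[_ /negbTE ->] //.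
  rewrite big1 // => j Hj; apply/negbTE; apply/eqP => Hji; move: Hi.
  by rewrite -Hji Hj.
apply/setP => i; have := key S i; rewrite H key => /negb_inj.
by move->.
Qed.

Lemma perm_exists (T : finType) (A B : {set T}) :
  #|A| = #|B| -> exists s : {perm T}, s @: A = B.
Proof.
move=> HAB.
pose sA := enum A ++ enum (~: A). pose sB := enum B ++ enum (~: B).
have memA x : x \in sA by rewrite mem_cat !mem_enum in_setC orbN.
have sizeAB : size sA = size sB by rewrite !size_cat -!cardE !cardsC.
have uB : uniq sB.
  rewrite cat_uniq !enum_uniq /= andbT; apply/hasPn => x.
  by rewrite !mem_enum in_setC.
pose f x := nth x sB (index x sA).
have finj : injective f.
  move=> x y Hxy.
  have ix : (index x sA < size sB)%N by rewrite -sizeAB index_mem memA.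
  have iy : (index y sA < size sB)%N by rewrite -sizeAB index_mem memA.
  have : index x sA = index y sA.
    apply/eqP; rewrite -(nth_uniq x ix iy uB).
    by apply/eqP; rewrite /f in Hxy; rewrite Hxy (set_nth_default y x iy).
  move=> E; rewrite -(nth_index x (memA x)) E (set_nth_default y x);
    last by rewrite index_mem memA.
  by rewrite nth_index // memA.
exists (perm finj).
apply/eqP; rewrite eqEcard card_imset ?HAB ?leqnn ?andbT; last exact: perm_inj.
apply/subsetP => _ /imsetP[x Hx ->]; rewrite permE /f.
have xA : x \in enum A by rewrite mem_enum.
have ix : (index x sA < size (enum B))%N.
  by rewrite index_cat xA -cardE -HAB cardE index_mem.
by rewrite nth_cat ix -mem_enum mem_nth.
Qed.

Lemma equiv_P n (S T : {set 'I_n}) : equiv_code (P S) (P T) = (#|S| == #|T|).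
Proof.
apply/idP/idP.
- case/existsP=> s /existsP[e /eqP H].
  have H' : P T = P (s @^-1: S) by rewrite -(tr_img s e); exact: H.
  by rewrite (P_inj H') card_preimset //; exact: perm_inj.
- move=> /eqP /esym /perm_exists [s Hs].
  apply/existsP; exists s; apply/existsP; exists [ffun => false]; apply/eqP.
  have -> : T = s @^-1: S.
    by apply/setP => j; rewrite -Hs inE mem_imset //; exact: perm_inj.
  by rewrite -(tr_img s [ffun => false]).
Qed.

Lemma P_code n (S : {set 'I_n}) : is_code (P S).
Proof.
apply/and3P; split.
- by rewrite inE big1 // => j _; rewrite mxE.
- apply/forallP=> x; apply/implyP=> Hx; apply/forallP => y; apply/implyP => Hy.
  move: Hx Hy; rewrite !inE => Hx Hy.
  rewrite (eq_bigr (fun j => x 0 j + y 0 j)); last by move=> j _; rewrite mxE.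
  by rewrite big_split oddZD (negbTE Hx) (negbTE Hy).
- apply/forallP=> a; apply/forallP=> x; apply/implyP; rewrite !inE => Hx.
  rewrite (eq_bigr (fun j => a * x 0 j)); last by move=> j _; rewrite mxE.
  by rewrite -mulr_sumr oddZM (negbTE Hx) andbF.
Qed.

Lemma P_nontriv m (S : {set 'I_m.+1}) (D : {set word m}) :
  ~~ equiv_code (P S) (triv_ext m.+1 D).
Proof.
apply/negP; case/existsP=> s /existsP[e /eqP H].
pose k := s ord_max.
pose c : word m.+1 := \row_j (2%:R * ((j == k) : nat)%:R).
have Hc : c \in P S.
  rewrite inE (eq_bigr (fun j => 2%:R * ((j == k) : nat)%:R)); last first.
    by move=> j _; rewrite mxE.
  by rewrite -mulr_sumr odd2.
have : tr s e c \in triv_ext m.+1 D by rewrite H; apply/imsetP; exists c.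
case/imsetP => d _ /(congr1 (fun w : word m.+1 => w 0 ord_max)).
rewrite !mxE /= insubN ?ltnn // eqxx => /eqP.
by case: (e ord_max).
Qed.

Definition sqH m (M : 'M[Z4]_(m.+1)) :=
  [/\ forall i j : 'I_m.+1, j != ord_max -> M i j = ((i == j) : nat)%:R,
      forall i : 'I_m.+1, i != ord_max -> M i ord_max \in [:: 0; 1]
    & M ord_max ord_max = 2%:R].

Definition TM m (M : 'M[Z4]_(m.+1)) : {set 'I_m.+1} :=
  [set j | (j == ord_max) || (M j ord_max == 1)].

Lemma col_lt m (M : 'M[Z4]_(m.+1)) (u : 'rV_m.+1) j :
  sqH M -> j != ord_max -> (u *m M) 0 j = u 0 j.
Proof.
case=> H1 _ _ Hj; rewrite mxE (bigD1 j) //= H1 // eqxx mulr1 big1 ?addr0 //.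
by move=> i /negbTE Hij; rewrite H1 // Hij mulr0.
Qed.

Lemma last_col m (M : 'M[Z4]_(m.+1)) (u : 'rV_m.+1) :
  sqH M -> (u *m M) 0 ord_max =
    u 0 ord_max * 2%:R + \sum_(i | i != ord_max) u 0 i * M i ord_max.
Proof. by case=> _ _ H3; rewrite mxE (bigD1 ord_max) //= H3. Qed.

Lemma keyodd m (M : 'M[Z4]_(m.+1)) (v : 'I_m.+1 -> Z4) : sqH M ->
  \big[addb/false]_(i | i != ord_max) odd (v i * M i ord_max)%R =
  \big[addb/false]_(j in TM M | j != ord_max) odd (v j).
Proof.
case=> _ H2 _; rewrite [RHS]big_mkcond [LHS]big_mkcond; apply: eq_bigr => i _.
rewrite inE; case: (eqVneq i ord_max) => [//|Hi] /=.
rewrite oddZM; have := H2 i Hi; rewrite !inE => /orP[/eqP-> | /eqP->].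
  by rewrite andbF.
by rewrite eqxx odd1 andbT.
Qed.
Lemma gen_sq m (M : 'M[Z4]_(m.+1)) : sqH M -> gen_code M = P (TM M).
Proof.
move=> HM; apply/setP => x; apply/imsetP/idP.
- case=> u _ ->; rewrite inE odd_sum (bigD1 ord_max) ?inE ?eqxx //=.
  rewrite last_col // oddZD oddZM andbF /= odd_sum keyodd //.
  rewrite (eq_bigr (fun j => odd (u 0 j))); last first.
    by move=> j /andP[_ Hj]; rewrite col_lt.
  by rewrite addbb.
- rewrite inE => Hx.
  pose y := x 0 ord_max - \sum_(i | i != ord_max) x 0 i * M i ord_max.
  exists (\row_i (if i == ord_max then ((y == 2%:R) : nat)%:R else x 0 i)) => //.
  apply/rowP => j; case: (eqVneq j ord_max) => [->|Hj]; last first.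
    by rewrite col_lt // !mxE (negbTE Hj).
  rewrite last_col // !mxE eqxx.
  rewrite (eq_bigr (fun i => x 0 i * M i ord_max)); last first.
    by move=> i Hi; rewrite !mxE (negbTE Hi).
  have Hy : ~~ odd y.
    rewrite /y oddZD oddZN odd_sum keyodd //.
    by move: Hx; rewrite odd_sum (bigD1 ord_max) ?inE ?eqxx.
  by rewrite mulrC -even2 // /y subrK.
Qed.

Lemma gen_cast r r' n (e : r = r') (M : 'M[Z4]_(r, n)) :
  gen_code (castmx (e, erefl n) M) = gen_code M.
Proof. by case: r' / e; rewrite castmx_id. Qed.

Lemma perm_code_tr n (s : 'S_n) (C : {set word n}) :
  perm_code s C = tr s [ffun => false] @: C.
Proof. by apply: eq_imset => c; apply/rowP => j; rewrite !mxE ffunE /= mul1r. Qed.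

Lemma std_sqH m (M : 'M[Z4]_(m + 1, m.+1)) :
  std_form M -> sqH (castmx (addn1 m, erefl m.+1) M).
Proof.
move/forallP => H.
have mm : (m < m + 1)%N by rewrite addn1.
split.
- move=> i j Hj; rewrite castmxE cast_ord_id.
  set i' := cast_ord _ i.
  have jm : (j < m)%N by rewrite ltn_neqAle -ltnS ltn_ord andbT; exact: Hj.
  have := H i'; move/forallP/(_ j); rewrite /= jm.
  case: ifP => Hi; first by move/eqP ->.
  move/eqP ->; move/negbT: Hi; rewrite -leqNgt => Hi.
  suff -> : (i == j) = false by [].
  apply/negbTE/eqP => E; move: (leq_trans jm Hi); rewrite -[X in (_ < X)%N]/(nat_of_ord i) E ltnn.
  by [].
- move=> i Hi; rewrite castmxE cast_ord_id.
  set i' := cast_ord _ i.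
  have im : (i < m)%N by rewrite ltn_neqAle -ltnS ltn_ord andbT; exact: Hi.
  have := H i'; move/forallP/(_ ord_max); by rewrite /= im ltnn mm.
- rewrite castmxE cast_ord_id.
  have := H (cast_ord (esym (addn1 m)) ord_max); move/forallP/(_ ord_max).
  by rewrite /= ltnn mm eqxx => /eqP.
Qed.

Lemma has_type_P m (C : {set word m.+1}) :
  has_type m 1 C -> exists2 S : {set 'I_m.+1}, S != set0 & C = P S.
Proof.
case/andP => _ /existsP[s /existsP[M /andP[Hstd /eqP HC]]].
have HM := std_sqH Hstd.
set M' := castmx _ M in HM.
have HC' : tr s [ffun => false] @: C = P (TM M').
  by rewrite -perm_code_tr HC -gen_sq // gen_cast.
pose f : {ffun 'I_m.+1 -> bool} := [ffun => false].
have trK c : tr (s^-1)%g f (tr s f c) = c.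
  by apply/rowP => j; rewrite !mxE !ffunE /= !mul1r permKV.
have Cid : tr (s^-1)%g f @: (tr s f @: C) = C.
  apply/setP => c; apply/imsetP/idP.
    by case=> _ /imsetP[c' Hc' ->] ->; rewrite trK.
  by move=> Hc; exists (tr s f c); [apply: imset_f | rewrite trK].
exists ((s^-1)%g @^-1: TM M').
  by apply/set0Pn; exists (s ord_max); rewrite !inE permK eqxx.
by rewrite -{1}Cid HC' tr_img.
Qed.

Lemma P_type m (S : {set 'I_m.+1}) : S != set0 -> has_type m 1 (P S).
Proof.
case/set0Pn => k Hk.
pose s := tperm k ord_max.
pose T := s @^-1: S.
pose M' : 'M[Z4]_(m.+1) := \matrix_(i, j) if j != ord_max then ((i == j) : nat)%:R
   else if i != ord_max then ((i \in T) : nat)%:R else 2%:R.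
have HM' : sqH M'.
  split.
  - by move=> i j Hj; rewrite mxE Hj.
  - by move=> i Hi; rewrite mxE eqxx Hi /=; case: (i \in T).
  - by rewrite mxE eqxx.
have HT : TM M' = T.
  apply/setP => j; rewrite !inE mxE eqxx /=.
  case: (eqVneq j ord_max) => [->|Hj] /=; first by rewrite tpermR Hk.
  by rewrite inE; case: (s j \in S).
have mm : (m < m + 1)%N by rewrite addn1.
rewrite /has_type; apply/andP; split; first by rewrite addn1.
apply/existsP; exists s; apply/existsP.
exists (castmx (esym (addn1 m), erefl m.+1) M'); apply/andP; split; last first.
  apply/eqP; rewrite gen_cast gen_sq // HT perm_code_tr tr_img //.
apply/forallP => i; apply/forallP => j; rewrite castmxE cast_ord_id mxE.
set i' := cast_ord _ i.
case: (ltnP i m) => Hi.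
  have Hi' : (i' == ord_max :> 'I_m.+1) = false by exact: ltn_eqF Hi.
  case: (ltnP j m) => Hj.
    have Hj' : (j == ord_max :> 'I_m.+1) = false by exact: ltn_eqF Hj.
    by rewrite Hj' /=.
  have -> : j = ord_max.
    by apply/val_inj/eqP; rewrite /= eqn_leq Hj -ltnS ltn_ord.
  by rewrite eqxx Hi' /= mm; case: (i' \in T).
have Hi' : i' = ord_max.
  apply/val_inj/eqP; rewrite /= eqn_leq Hi andbT -ltnS.
  by move: (nat_of_ord i) (ltn_ord i) => x; rewrite addn1.
have iv : nat_of_ord i = m := congr1 val Hi'.
rewrite Hi' eqxx /=.
case: (ltnP j m) => Hj.
  have Hj' : (j == ord_max :> 'I_m.+1) = false by exact: ltn_eqF Hj.
  by rewrite Hj' /= [ord_max == j]eq_sym Hj'.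
have -> : j = ord_max.
  by apply/val_inj/eqP; rewrite /= eqn_leq Hj -ltnS ltn_ord.
by rewrite eqxx /= mm iv eqxx.
Qed.

Lemma nontriv_char m :
  nontriv_codes m.+1 m 1 = @P _ @: [set S : {set 'I_m.+1} | S != set0].
Proof.
apply/setP => C; rewrite inE; apply/and3P/imsetP.
- case=> _ Ht _; have [S HS ->] := has_type_P Ht.
  by exists S => //; rewrite inE.
- case=> S; rewrite inE => HS ->; split.
  + exact: P_code.
  + exact: P_type.
  + apply/existsP => -[D /andP[_ H]].
    by move: (P_nontriv S D); rewrite H.
Qed.

Lemma card_Sk n k : (k <= n)%N -> #|[set i : 'I_n | (i < k)%N]| = k.
Proof.
move=> Hk.
have -> : [set i : 'I_n | (i < k)%N] = [set widen_ord Hk i | i : 'I_k].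
  apply/setP => i; rewrite inE; apply/idP/imsetP.
    by move=> Hi; exists (Ordinal Hi) => //; exact: val_inj.
  by case=> j _ ->; rewrite /= ltn_ord.
rewrite card_imset ?card_ord //; move=> x y /(congr1 val) /= E; exact: val_inj.
Qed.

Theorem mainTheorem4 (n : nat) : (0 < n)%N -> Nprime n n.-1 1 = n.
Proof.
case: n => // m _.
rewrite /Nprime /= nontriv_char.
set NE := [set S : {set 'I_m.+1} | S != set0].
pose Q (k : nat) := @P _ @: [set T : {set 'I_m.+1} | (T != set0) && (#|T| == k)].
rewrite -imset_comp (eq_in_imset (g := fun S : {set 'I_m.+1} => Q #|S|)); last first.
  move=> S HS /=; apply/setP => D; rewrite !inE; apply/andP/imsetP.
  - case=> /imsetP[T HT ->] He; exists T => //; rewrite inE.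
    by rewrite inE in HT; rewrite HT /= eq_sym -equiv_P.
  - case=> T; rewrite inE => /andP[HT /eqP HTS] ->; split.
      by apply: imset_f; rewrite inE.
    by rewrite equiv_P HTS.
pose Sk (k : nat) := [set i : 'I_m.+1 | (i < k)%N].
have Sk_ne (k : 'I_m.+2) : k \in [set~ ord0] -> Sk k != set0.
  rewrite !inE => Hk; rewrite -cards_eq0 card_Sk; first exact: Hk.
  by rewrite -ltnS ltn_ord.
have -> : [set Q #|S| | S : {set 'I_m.+1} in NE] = [set Q (val k) | k in [set~ (ord0 : 'I_m.+2)]].
  apply/setP => X; apply/imsetP/imsetP.
  - case=> S HS ->.
    have Hs : (#|S| < m.+2)%N.
      by rewrite ltnS (leq_trans (max_card _)) // card_ord.
    exists (inord #|S|); last by rewrite /= inordK.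
    rewrite !inE; apply/eqP => /(congr1 val); rewrite /= inordK // => /eqP.
    by rewrite cards_eq0; rewrite inE in HS; rewrite (negbTE HS).
  - case=> k Hk ->; exists (Sk k); first by rewrite inE Sk_ne.
    by rewrite card_Sk // -ltnS ltn_ord.
rewrite card_in_imset ?cardsC1 ?card_ord //.
move=> k1 k2 H1 H2 /= EQ; apply/val_inj.
have : P (Sk k1) \in Q k1.
  by apply: imset_f; rewrite inE Sk_ne //= card_Sk // -ltnS ltn_ord.
rewrite EQ => /imsetP[T]; rewrite inE => /andP[_ /eqP HT] /P_inj HS.
transitivity #|T|; last exact: HT.
by rewrite -HS card_Sk // -ltnS ltn_ord.
Qed.
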